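(* Suppose $\psi_1(u)\le\psi_1(u')\exp(C_3|u-u'|)$ for all $u,u'\in\mathbb R$ (with $C_3\ge0$) and $\max_{0\le j\le q}|g_j(\bm X)|\le C_4$ a.s. Then for any $\alpha,\tilde\alpha\in\mathbb R^{q+1}$, with $b=\alpha-\tilde\alpha$ and $C_{40}=C_3C_4$, $$D^\dagger_{\rm WL}(\alpha^\top\bm G,\tilde\alpha^\top\bm G;\bar\gamma)\ge\{b^\top\tilde{\bm\Sigma}_\alpha(\tilde\alpha)b\}\frac{1-\exp(-C_{40}\|b\|_1)}{C_{40}\|b\|_1},$$ where $\tilde{\bm\Sigma}_\alpha(\tilde\alpha)=\tilde{\mathbb E}[Rw(\bm X;\bar\gamma)\psi_1(\tilde\alpha^\top\bm G)\bm G\bm G^\top]$, and $\{1-\exp(-c)\}/c$ is interpreted as $1$ when $c=0$.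
   Context: $\tilde{\mathbb E}$ is the sample mean over observations $(\bm X_i,Y_i,R_i)$ with $R_i\in\{0,1\}$. $\bm F$ and $\bm G=(g_0,\dots,g_q)^\top$ are vectors of functions of $\bm X$. $w(\bm X;\gamma)=\exp(-\gamma^\top\bm F)$, and $\bar\gamma$ is a fixed vector. $\psi$ is an increasing differentiable inverse link with derivative $\psi_1$. $D^\dagger_{\rm WL}(h,h';\gamma)=\tilde{\mathbb E}[Rw(\bm X;\gamma)\{\psi(h)-\psi(h')\}(h-h')]$. *)

(* Defs.v *)
From HB Require Import structures.
From mathcomp Require Import all_boot all_order all_algebra.
From mathcomp Require Import all_classical all_reals all_analysis.
Set Implicit Arguments. Unset Strict Implicit. Unset Printing Implicit Defensive.
Import Order.TTheory GRing.Theory Num.Theory.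
Import numFieldNormedType.Exports.
Local Open Scope ring_scope.

Definition Etilde (R : realType) (n : nat) (f : 'I_n -> R) : R :=
  n%:R^-1 * \sum_(i < n) f i.

Definition wgt (R : realType) (T : Type) (p : nat)
  (F : T -> 'cV[R]_p) (gamma : 'cV[R]_p) (x : T) : R :=
  expR (- ((gamma^T *m F x) 0 0)).

Definition D_WL (R : realType) (T : Type) (p n : nat)
  (X : 'I_n -> T) (Rv : 'I_n -> R) (F : T -> 'cV[R]_p) (psi : R -> R)
  (h h' : T -> R) (gamma : 'cV[R]_p) : R :=
  Etilde (fun i => Rv i * wgt F gamma (X i) *
                   (psi (h (X i)) - psi (h' (X i))) * (h (X i) - h' (X i))).

Definition linG (R : realType) (T : Type) (q : nat)
  (G : T -> 'cV[R]_(q.+1)) (alpha : 'cV[R]_(q.+1)) (x : T) : R :=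
  (alpha^T *m G x) 0 0.

Definition Sigma_tilde (R : realType) (T : Type) (p n q : nat)
  (X : 'I_n -> T) (Rv : 'I_n -> R) (F : T -> 'cV[R]_p) (psi1 : R -> R)
  (G : T -> 'cV[R]_(q.+1)) (gamma : 'cV[R]_p) (at_ : 'cV[R]_(q.+1))
  : 'M[R]_(q.+1) :=
  n%:R^-1 *: \sum_(i < n)
     ((Rv i * wgt F gamma (X i) * psi1 (linG G at_ (X i))) *:
        (G (X i) *m (G (X i))^T)).

Definition norm1 (R : realType) (m : nat) (b : 'cV[R]_m) : R :=
  \sum_(j < m) `|b j 0|.

Definition expfrac (R : realType) (c : R) : R :=
  if c == 0 then 1 else (1 - expR (- c)) / c.

(* Main.v *)
Set Warnings "-all".
Require Import Defs.
From HB Require Import structures.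
From mathcomp Require Import all_boot all_order all_algebra.
From mathcomp Require Import all_classical all_reals all_analysis.
From mathcomp Require Import ring lra.
Import Order.TTheory GRing.Theory Num.Theory.
Import numFieldNormedType.Exports.
Local Open Scope ring_scope.

Lemma deriv_ge0 (R : realType) (f f1 : R -> R)
  (fi : {homo f : u v / u <= v})
  (df : forall u : R, is_derive u 1 f (f1 u)) x : 0 <= f1 x.
Proof.
apply/ler_addgt0Pr => e e0; rewrite ?add0r.
pose g := fun u => f u + e * u.
have dg : forall u : R, is_derive u 1 g (f1 u + e).
  move=> u; rewrite /g.
  have -> : (fun u0 => f u0 + e * u0) = f \+ (e *: id) by apply/funext=> y.
  apply: is_deriveD; rewrite -[e in X in is_derive _ _ _ X]mulr1.
  exact: is_deriveZ.
have : 0 <= derive1 g x.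
  apply: (@incr_derive1_ge0 _ g setT).
  - by move=> y _; have [] := dg y.
  - move=> u v _ _ uv; rewrite /g; apply: ler_ltD; first exact/fi/ltW.
    by rewrite ltr_pM2l.
  - by rewrite interiorT.
by rewrite derive1E (@derive_val _ _ _ _ _ _ _ (dg x)).
Qed.

Lemma core_gen (R : realType) (f f1 E : R -> R) (C3 c : R)
  (df : forall u : R, is_derive u 1 f (f1 u))
  (f1pos : forall u, 0 <= f1 u)
  (hf1 : forall u u' : R, f1 u <= f1 u' * expR (C3 * `|u - u'|))
  (cC3 : C3 <= c)
  (dE : forall t : R, is_derive t 1 E (expR (- (c * t))))
  (a s : R) (s0 : 0 <= s) :
  f1 a * (E s - E 0) <= f (a + s) - f a.
Proof.
pose phi := fun t => f (a + t) - f1 a * E t.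
have dphi : forall t : R, is_derive t 1 phi (f1 (a + t) - f1 a * expR (- (c * t))).
  move=> t.
  have -> : phi = (f \o (fun t => a + t)) - (f1 a \*: E).
    by apply/funext => y.
  apply: is_deriveB.
  have h1 : is_derive t (1:R) (fun y : R => a + y) 1.
    have := is_deriveD (is_derive_cst a t 1) (is_derive_id t 1); rewrite add0r.
    by have -> : (cst a + id) = (fun y : R => a + y) by apply/funext.
  have := is_derive1_comp (df (a + t)) h1; rewrite mulr1.
  by [].
have [|ξ ξin eq] := @MVT_segment R phi _ 0 s s0 (fun x _ => dphi x).
  apply: derivable_within_continuous => x _.
  by have [] := dphi x.
have : 0 <= phi s - phi 0.
  rewrite eq subr0 mulr_ge0 // subr_ge0.
  have hx : 0 <= ξ by move: ξin; rewrite in_itv /= => /andP[].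
  have := hf1 a (a + ξ).
  rewrite opprD addrA subrr add0r normrN ger0_norm //.
  move=> h.
  apply: (le_trans (ler_wpM2r (expR_ge0 _) h)).
  rewrite -mulrA -expRD -[X in _ <= X]mulr1 ler_wpM2l //.
  rewrite expR_le1 -mulNr -mulrDl mulr_le0_ge0 // subr_le0 //.
rewrite /phi addr0 subr_ge0.
move=> h; lra.
Qed.

Lemma core (R : realType) (f f1 : R -> R) (C3 : R)
  (df : forall u : R, is_derive u 1 f (f1 u))
  (f1pos : forall u, 0 <= f1 u)
  (hf1 : forall u u' : R, f1 u <= f1 u' * expR (C3 * `|u - u'|))
  (hC3 : 0 <= C3) (a s K : R) (s0 : 0 < s) (K0 : 0 <= K) (hK : C3 * s <= K) :
  f1 a * s * expfrac K <= f (a + s) - f a.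
Proof.
rewrite /expfrac; case: eqP => [K00|/eqP Kn0].
  have C30 : C3 = 0.
    apply/eqP; rewrite eq_le hC3 andbT.
    by rewrite -(pmulr_lle0 _ s0); rewrite -K00.
  rewrite mulr1.
  have c0 : C3 <= 0 by rewrite C30.
  have := @core_gen R f f1 id C3 0 df f1pos hf1 c0 _ a s (ltW s0).
  rewrite subr0; apply => t; rewrite mul0r oppr0 expR0.
  exact: is_derive_id.
have Kp : 0 < K by rewrite lt_def Kn0.
pose c := K / s.
have cp : 0 < c by rewrite divr_gt0.
have cC3 : C3 <= c by rewrite /c ler_pdivlMr.
have := @core_gen R f f1 (fun t : R => 0 - c^-1 * expR (- (c * t))) C3 c df f1pos hf1 cC3 _ a s (ltW s0).
have -> : c * s = K by rewrite /c divfK // gt_eqF.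
rewrite mulr0 oppr0 expR0 mulr1.
have -> : 0 - c^-1 * expR (- K) - (0 - c^-1) = s * ((1 - expR (- K)) / K).
  rewrite /c invf_div; field; rewrite gt_eqF //.
rewrite mulrA; apply.
move=> t.
have hg : is_derive t (1:R) (fun y : R => - (c * y)) (- c).
  have := is_deriveN (is_deriveZ c (is_derive_id t (1:R))).
  by rewrite /GRing.scale /= mulr1.
have he := @is_derive1_comp R expR (fun y : R => - (c * y)) t _ _ (is_derive_expR _) hg.
have hz := is_deriveB (is_derive_cst (0:R) t (1:R)) (is_deriveZ (c^-1) he).
apply: (is_derive_eq hz).
rewrite /GRing.scale /=; field; exact: lt0r_neq0.
Qed.

Lemma obs (R : realType) (psi psi1 : R -> R)
  (psi_incr : {homo psi : u v / u <= v})
  (psi_deriv : forall u : R, is_derive u 1 psi (psi1 u))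
  (C3 : R) (hC3 : 0 <= C3)
  (hpsi1 : forall u u' : R, psi1 u <= psi1 u' * expR (C3 * `|u - u'|))
  (h h' K : R) (K0 : 0 <= K) (hK : C3 * `|h - h'| <= K) :
  psi1 h' * (h - h')^+2 * expfrac K <= (psi h - psi h') * (h - h').
Proof.
have p1 := @deriv_ge0 _ psi psi1 psi_incr psi_deriv.
have [dlt|dgt|deq] := ltgtP (h - h') 0.
- pose f := fun u : R => 0 - psi (- u).
  have df : forall u : R, is_derive u 1 f (psi1 (- u)).
    move=> u.
    have hn : is_derive u (1:R) (fun y : R => - y) (-1).
      by have := is_deriveN (is_derive_id u (1:R)).
    have hc := @is_derive1_comp R psi (fun y : R => - y) u _ _ (psi_deriv _) hn.
    have hz := is_deriveB (is_derive_cst (0:R) u (1:R)) hc.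
    apply: (is_derive_eq hz); rewrite /=; lra.
  have hf1 : forall u u' : R, psi1 (- u) <= psi1 (- u') * expR (C3 * `|u - u'|).
    by move=> u u'; have := hpsi1 (- u) (- u'); rewrite -opprD normrN.
  have := @core R f (fun u => psi1 (- u)) C3 df (fun u => p1 _) hf1 hC3 (- h') (- (h - h')) K
    ltac:(by rewrite oppr_gt0) K0 ltac:(by rewrite ltr0_norm // in hK).
  rewrite /f opprK (_ : - (- h' - (h - h')) = h); last by ring.
  move=> H; have {H} : psi1 h' * - (h - h') * expfrac K <= psi h' - psi h by lra.
  move=> H.
  have := ler_wpM2r (ltW (ltac:(by rewrite oppr_gt0) : 0 < - (h - h'))) H.
  set E := expfrac K; move=> H2.
  have e1 : psi1 h' * (h - h')^+2 * E = psi1 h' * (- (h - h')) * E * (- (h - h')) by ring.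
  have e2 : (psi h - psi h') * (h - h') = (psi h' - psi h) * (- (h - h')) by ring.
  by rewrite e1 e2.
- have := @core R psi psi1 C3 psi_deriv p1 hpsi1 hC3 h' (h - h') K dgt K0
    ltac:(by rewrite gtr0_norm // in hK).
  rewrite (_ : h' + (h - h') = h); last by ring.
  move=> H; have := ler_wpM2r (ltW dgt) H.
  set E := expfrac K; move=> H2.
  have e1 : psi1 h' * (h - h')^+2 * E = psi1 h' * (h - h') * E * (h - h') by ring.
  by rewrite e1.
- by rewrite deq expr0n /= mulr0 mul0r mulr0.
Qed.

Lemma quad (R : realType) (m : nat) (k : R) (I : nat) (s : 'I_I -> R)
  (g : 'I_I -> 'cV[R]_m) (b : 'cV[R]_m) :
  (b^T *m (k *: \sum_(i < I) (s i *: (g i *m (g i)^T))) *m b) 0 0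
  = k * \sum_(i < I) s i * ((b^T *m g i) 0 0)^+2.
Proof.
rewrite -scalemxAr -scalemxAl mxE; congr (_ * _).
rewrite mulmx_sumr mulmx_suml summxE; apply: eq_bigr => i _.
rewrite -scalemxAr -scalemxAl mxE; congr (_ * _).
rewrite !mulmxA -[_ *m b]mulmxA -{2}(trmxK b) -trmx_mul mxE big_ord1 mxE expr2.
by rewrite mxE mxE.
Qed.

Lemma linE (R : realType) (T : Type) (q : nat) (G : T -> 'cV[R]_(q.+1))
  (alpha alphat : 'cV[R]_(q.+1)) x :
  ((alpha - alphat)^T *m G x) 0 0 = linG G alpha x - linG G alphat x.
Proof. rewrite /linG (_ : (alpha - alphat)^T = alpha^T - alphat^T); last by apply/matrixP => i j; rewrite !mxE.
by rewrite mulmxBl !mxE. Qed.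

Lemma bnd (R : realType) (m : nat) (g b : 'cV[R]_m) (C4 : R)
  (hg : forall j, `|g j 0| <= C4) :
  `|(b^T *m g) 0 0| <= C4 * norm1 b.
Proof.
rewrite mxE /norm1 mulr_sumr.
apply: (le_trans (ler_norm_sum _ _ _)); apply: ler_sum => j _.
by rewrite mxE normrM mulrC ler_wpM2r.
Qed.
Theorem lemmaS16 (R : realType) (T : Type) (p n q : nat)
  (X : 'I_n -> T) (Rv : 'I_n -> R)
  (hR : forall i, Rv i = 0 \/ Rv i = 1)
  (F : T -> 'cV[R]_p) (G : T -> 'cV[R]_(q.+1)) (gbar : 'cV[R]_p)
  (psi psi1 : R -> R)
  (psi_incr : {homo psi : u v / u <= v})
  (psi_deriv : forall u : R, is_derive u 1 psi (psi1 u))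
  (C3 C4 : R) (hC3 : 0 <= C3)
  (hpsi1 : forall u u' : R, psi1 u <= psi1 u' * expR (C3 * `|u - u'|))
  (hG : forall (i : 'I_n) (j : 'I_q.+1), `|G (X i) j 0| <= C4)
  (alpha alphat : 'cV[R]_(q.+1)) :
  let b := alpha - alphat in
  let C40 := C3 * C4 in
  D_WL X Rv F psi (linG G alpha) (linG G alphat) gbar >=
    (b^T *m Sigma_tilde X Rv F psi1 G gbar alphat *m b) 0 0
    * expfrac (C40 * norm1 b).
Proof.
cbv zeta; set b := alpha - alphat; set C40 := C3 * C4.
rewrite /Sigma_tilde quad /D_WL /Etilde.
rewrite -mulrA mulr_suml; apply: ler_wpM2l; first by rewrite invr_ge0 ler0n.
apply: ler_sum => i _.
have C4ge0 : 0 <= C4 := le_trans (normr_ge0 _) (hG i ord0).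
have n1 : 0 <= norm1 b by apply: sumr_ge0 => j _; exact: normr_ge0.
have K0 : 0 <= C40 * norm1 b by rewrite /C40 !mulr_ge0.
have hd : C3 * `|linG G alpha (X i) - linG G alphat (X i)| <= C40 * norm1 b.
  rewrite -linE -/b /C40 -mulrA ler_wpM2l //.
  exact: bnd.
have rw0 : 0 <= Rv i * wgt F gbar (X i).
  by rewrite mulr_ge0 ?expR_ge0 //; case: (hR i) => ->.
rewrite /b linE.
have := @obs R psi psi1 psi_incr psi_deriv C3 hC3 hpsi1 _ _ _ K0 hd.
move=> H.
have := ler_wpM2l rw0 H.
set W := Rv i * wgt F gbar (X i).
move=> H2.
rewrite -!mulrA in H2 *.
by [].
Qed.
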